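(* Let $X$ be an exponential vector space over a field $K$, and let $A$ and $B$ be two bases of $X\smallsetminus X_0$. Then for every $a\in A$ there exists exactly one $b_a\in B$ such that $L(a)=L(b_a)$.
   Context: An exponential vector space (evs) over a field $K$ is a partially ordered set $(X,\leq)$ with a binary operation $+$ on $X$ and a map $K\times X\to X$, $(\alpha,x)\mapsto \alpha x$, such that: (A1) $(X,+)$ is a commutative semigroup with identity $\theta$; (A2) $x\leq y$ implies $x+z\leq y+z$ and $\alpha x\leq \alpha y$ for all $z\in X$, $\alpha\in K$; (A3) $\alpha(x+y)=\alpha x+\alpha y$, $\alpha(\beta x)=(\alpha\beta)x$, $(\alpha+\beta)x\leq \alpha x+\beta x$, $1x=x$; (A4) $\alpha x=\theta$ iff $\alpha=0$ or $x=\theta$; (A5) $x+(-1)x=\theta$ iff $x\in X_0$, where $X_0:=\{z\in X: y\not\leq z \text{ for all } y\in X\smallsetminus\{z\}\}$ (the set of minimal elements, called the primitive space; it is a vector space over $K$); (A6) for each $x\in X$ there is $p\in X_0$ with $p\leq x$. For $x\in X\smallsetminus X_0$ let $L(x):=\{z\in X: z\geq \alpha x+p \text{ for some } \alpha\in K\smallsetminus\{0\},\ p\in X_0\}$. A subset $B\subseteq X\smallsetminus X_0$ generates $X\smallsetminus X_0$ if $X\smallsetminus X_0=\bigcup_{b\in B}L(b)$. Elements $x,y\in X\smallsetminus X_0$ are orderly dependent if $x\in L(y)$ or $y\in L(x)$, and orderly independent otherwise; $B\subseteq X\smallsetminus X_0$ is orderly independent if any two distinct members of $B$ are orderly independent.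 A basis of $X\smallsetminus X_0$ is an orderly independent subset of $X\smallsetminus X_0$ that generates $X\smallsetminus X_0$. *)

(* Defs.v *)
From mathcomp Require Import all_boot all_algebra.
Set Implicit Arguments. Unset Strict Implicit. Unset Printing Implicit Defensive.
Import GRing.Theory.
Local Open Scope ring_scope.

Section EVS.
Variables (K : fieldType) (X : Type).
Variables (le : X -> X -> Prop) (add : X -> X -> X) (smul : K -> X -> X) (theta : X).

Definition primitive (z : X) : Prop := forall y : X, y <> z -> ~ le y z.

Record is_evs : Prop := IsEvs {
  evs_refl : forall x, le x x;
  evs_antisym : forall x y, le x y -> le y x -> x = y;
  evs_trans : forall x y z, le x y -> le y z -> le x z;
  evs_addA : forall x y z, add x (add y z) = add (add x y) z;
  evs_addC : forall x y, add x y = add y x;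
  evs_add0 : forall x, add x theta = x;
  evs_le_add : forall x y z, le x y -> le (add x z) (add y z);
  evs_le_smul : forall x y (a : K), le x y -> le (smul a x) (smul a y);
  evs_smulD : forall (a : K) x y, smul a (add x y) = add (smul a x) (smul a y);
  evs_smulA : forall (a b : K) x, smul a (smul b x) = smul (a * b) x;
  evs_smul_addle : forall (a b : K) x, le (smul (a + b) x) (add (smul a x) (smul b x));
  evs_smul1 : forall x, smul 1 x = x;
  evs_smul_eq0 : forall (a : K) x, smul a x = theta <-> (a = 0 \/ x = theta);
  evs_prim : forall x, add x (smul (-1) x) = theta <-> primitive x;
  evs_below_prim : forall x, exists2 p, primitive p & le p x
}.

Definition Lset (x : X) (z : X) : Prop :=
  exists (a : K) (p : X), a <> 0 /\ primitive p /\ le (add (smul a x) p) z.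

Definition generates (B : X -> Prop) : Prop :=
  (forall b, B b -> ~ primitive b) /\
  (forall z, ~ primitive z -> exists2 b, B b & Lset b z).

Definition orderly_dependent (x y : X) : Prop := Lset y x \/ Lset x y.

Definition orderly_independent_set (B : X -> Prop) : Prop :=
  (forall b, B b -> ~ primitive b) /\
  (forall x y, B x -> B y -> x <> y -> ~ orderly_dependent x y).

Definition is_basis (B : X -> Prop) : Prop :=
  orderly_independent_set B /\ generates B.

End EVS.

(* Main.v *)
Require Import Defs.
From mathcomp Require Import all_boot all_algebra.
From Stdlib Require Import Classical.
Import GRing.Theory.
Local Open Scope ring_scope.

Set Implicit Arguments.
Section Aux.
Variables (K : fieldType) (X : Type) (le : X -> X -> Prop)
  (add : X -> X -> X) (smul : K -> X -> X) (theta : X)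
  (Hevs : is_evs le add smul theta).

Lemma smul_theta (a : K) : smul a theta = theta.
Proof. by apply/(evs_smul_eq0 Hevs); right. Qed.

Lemma prim_theta : primitive le theta.
Proof. apply/(evs_prim Hevs). rewrite smul_theta; exact: (evs_add0 Hevs). Qed.

Lemma prim_smul (b : K) p : primitive le p -> primitive le (smul b p).
Proof.
move=> /(evs_prim Hevs) Hp; apply/(evs_prim Hevs).
rewrite (evs_smulA Hevs) GRing.mulrC -(evs_smulA Hevs) -(evs_smulD Hevs) Hp.
exact: smul_theta.
Qed.

Lemma prim_add p q : primitive le p -> primitive le q -> primitive le (add p q).
Proof.
move=> /(evs_prim Hevs) Hp /(evs_prim Hevs) Hq; apply/(evs_prim Hevs).
rewrite (evs_smulD Hevs).
set P' := smul (-1) p; set Q' := smul (-1) q.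
have E : add (add p q) (add P' Q') = add (add p P') (add q Q').
  rewrite (evs_addA Hevs) -(evs_addA Hevs p q P') (evs_addC Hevs q P').
  by rewrite (evs_addA Hevs p P' q) -(evs_addA Hevs _ q Q').
by rewrite E Hp Hq (evs_add0 Hevs).
Qed.

Lemma L_refl x : Lset le add smul x x.
Proof.
exists 1, theta; split; first by apply/eqP; exact: GRing.oner_neq0.
split; first exact: prim_theta.
rewrite (evs_add0 Hevs) (evs_smul1 Hevs); exact: (evs_refl Hevs).
Qed.

Lemma L_trans x y z : Lset le add smul x y -> Lset le add smul y z -> Lset le add smul x z.
Proof.
move=> [a [p [Ha [Hp Hy]]]] [b [q [Hb [Hq Hz]]]].
exists (b * a), (add (smul b p) q); split; first by apply/eqP; apply: mulf_neq0; apply/eqP.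
split; first by apply: prim_add => //; apply: prim_smul.
apply: (evs_trans Hevs) Hz.
rewrite (evs_addA Hevs) -(evs_smulA Hevs) -(evs_smulD Hevs).
apply: (evs_le_add Hevs); exact: (evs_le_smul Hevs).
Qed.
End Aux.
Unset Implicit Arguments.

Theorem mainTheorem16 (K : fieldType) (X : Type) (le : X -> X -> Prop)
  (add : X -> X -> X) (smul : K -> X -> X) (theta : X)
  (Hevs : is_evs le add smul theta)
  (A B : X -> Prop)
  (HA : is_basis le add smul A) (HB : is_basis le add smul B) :
  forall a, A a ->
    exists b, B b /\ (forall z, Lset le add smul a z <-> Lset le add smul b z) /\
      (forall b', B b' -> (forall z, Lset le add smul a z <-> Lset le add smul b' z) -> b' = b).
Proof.
move=> a Aa.
case: HA => [[HAnp HAind] [_ HAgen]]; case: HB => [[HBnp HBind] [_ HBgen]].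
have [b Bb Hab] := HBgen a (HAnp a Aa).
have [a' Aa' Hba'] := HAgen b (HBnp b Bb).
have Haa' : a' = a.
  apply: NNPP => Hne.
  by apply: (HAind a a' Aa Aa' (fun e => Hne (esym e))); left; apply: (L_trans Hevs) Hba' Hab.
subst a'.
have Eq : forall z, Lset le add smul a z <-> Lset le add smul b z.
  by move=> z; split => H; [apply: (L_trans Hevs) Hab H | apply: (L_trans Hevs) Hba' H].
exists b; split=> //; split=> // b' Bb' Hb'.
apply: NNPP => Hne.
apply: (HBind b' b Bb' Bb Hne); left.
by apply/Eq/Hb'; apply: (L_refl Hevs).
Qed.
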